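(* Let $\Omega$ be a finite set, $k\geq3$, $\Psi$ a finite nonempty set of functions $\Omega^k\to(0,\infty)$ and $\Psi^*=\{\psi^J:\psi\in\Psi,\,J\subset[k]\}$. For every integer $L>0$ and every $\alpha>0$ there exist $\varepsilon=\varepsilon(\alpha,L,\Psi)>0$ and $n_0=n_0(\varepsilon,L)$ such that the following holds. Let $G$ be a factor graph with $n>n_0$ variable nodes all of whose weight functions lie in $\Psi^*$, and suppose $\mu_G$ is $(\varepsilon,2)$-symmetric. Let $G^+$ be obtained from $G$ by adding $L$ constraint nodes $b_1,\ldots,b_L$ with arbitrary neighbourhoods and arbitrary weight functions $\psi_{b_1},\ldots,\psi_{b_L}\in\Psi^*$. Then $\mu_{G^+}$ is $(\alpha,2)$-symmetric and $$\sum_{x\in V(G)}\left\|\mu_{G,x}-\mu_{G^+,x}\right\|_{TV}<\alpha n.$$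
   Context: Factor graphs: a factor graph $G$ has variable nodes $V(G)$, constraint nodes $F(G)$, for each $a\in F(G)$ an ordered tuple $\partial a$ of variable nodes and a weight function $\psi_a:\Omega^{|\partial a|}\to(0,\infty)$; its Gibbs measure is $\mu_G(\sigma)=Z_G^{-1}\prod_a\psi_a(\sigma(\partial a))$ on $\Omega^{V(G)}$, and $\mu_{G,x}$ is the marginal of $x$. For $\psi:\Omega^k\to(0,\infty)$ and $J\subset[k]$, $\psi^J:\Omega^J\to(0,\infty)$ is $\psi^J((\sigma_j)_{j\in J})=|\Omega|^{|J|-k}\sum_{(\sigma_j)_{j\notin J}\in\Omega^{k-|J|}}\psi(\sigma_1,\ldots,\sigma_k)$. For a probability measure $\mu$ on $\Omega^n$ (coordinates identified with the $n$ variable nodes), $\mu_x$ and $\mu_{x,y}$ denote its one- and two-coordinate marginals; $\mu$ is $(\varepsilon,2)$-symmetric if $\sum_{x,y\in[n]}\|\mu_{x,y}-\mu_x\otimes\mu_y\|_{TV}<\varepsilon n^2$. *)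

(* Defs.v *)
From HB Require Import structures.
From Stdlib Require Import Reals.
From mathcomp Require Import all_boot.

Set Implicit Arguments.
Unset Strict Implicit.
Unset Printing Implicit Defensive.

Local Open Scope R_scope.

(* psi^J, given the values tau j for j in J (values of tau outside J are ignored):
   |Omega|^(|J|-k) * sum over the coordinates outside J. *)
Definition psiJ (Om : finType) (k : nat) (psi : {ffun 'I_k -> Om} -> R)
    (J : {set 'I_k}) (tau : 'I_k -> Om) : R :=
  (\big[Rplus/0]_(rho : {ffun 'I_k -> Om} | [forall j in J, rho j == tau j]) psi rho)
  / pow (INR #|Om|) (k - #|J|)%N.

(* A constraint node whose weight function is psi^J (an element of Psi^* when
   psi is in Psi); its neighbourhood is the tuple (c_nb j)_{j in J}, ordered
   by j (values of c_nb outside J are irrelevant). *)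
Record constraint (Om : finType) (k n : nat) := Constraint {
  c_psi : {ffun 'I_k -> Om} -> R ;
  c_J   : {set 'I_k} ;
  c_nb  : 'I_k -> 'I_n }.

Definition factor_graph (Om : finType) (k n : nat) := seq (constraint Om k n).

Definition in_Psi_star (Om : finType) (k n : nat)
    (Psi : list ({ffun 'I_k -> Om} -> R)) (a : constraint Om k n) : Prop :=
  List.In (c_psi a) Psi.

Definition gweight (Om : finType) (k n : nat) (G : factor_graph Om k n)
    (s : {ffun 'I_n -> Om}) : R :=
  \big[Rmult/1]_(a <- G) psiJ (c_psi a) (c_J a) (fun j => s (c_nb a j)).

Definition partition_fn (Om : finType) (k n : nat) (G : factor_graph Om k n) : R :=
  \big[Rplus/0]_(s : {ffun 'I_n -> Om}) gweight G s.

Definition gibbs (Om : finType) (k n : nat) (G : factor_graph Om k n)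
    (s : {ffun 'I_n -> Om}) : R :=
  gweight G s / partition_fn G.

Definition marg1 (Om : finType) (n : nat) (mu : {ffun 'I_n -> Om} -> R)
    (x : 'I_n) (w : Om) : R :=
  \big[Rplus/0]_(s : {ffun 'I_n -> Om} | s x == w) mu s.

Definition marg2 (Om : finType) (n : nat) (mu : {ffun 'I_n -> Om} -> R)
    (x y : 'I_n) (w w' : Om) : R :=
  \big[Rplus/0]_(s : {ffun 'I_n -> Om} | (s x == w) && (s y == w')) mu s.

Definition tv1 (Om : finType) (p q : Om -> R) : R :=
  / 2 * \big[Rplus/0]_(w : Om) Rabs (p w - q w).

Definition tv2 (Om : finType) (p q : Om -> Om -> R) : R :=
  / 2 * \big[Rplus/0]_(w : Om) \big[Rplus/0]_(w' : Om) Rabs (p w w' - q w w').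

Definition symmetric2 (Om : finType) (n : nat) (eps : R)
    (mu : {ffun 'I_n -> Om} -> R) : Prop :=
  \big[Rplus/0]_(x : 'I_n) \big[Rplus/0]_(y : 'I_n)
     tv2 (marg2 mu x y) (fun w w' => marg1 mu x w * marg1 mu y w')
  < eps * pow (INR n) 2.

(* Main.v *)
Require Import Defs.
From HB Require Import structures.
From Stdlib Require Import Reals Lra Psatz FunctionalExtensionality.
From mathcomp Require Import all_boot.
Set Implicit Arguments.
Unset Strict Implicit.
Local Open Scope R_scope.

HB.instance Definition _ := Monoid.isComLaw.Build R 0 Rplus (fun a b c => esym (Rplus_assoc a b c)) Rplus_comm Rplus_0_l.
HB.instance Definition _ := Monoid.isComLaw.Build R 1 Rmult (fun a b c => esym (Rmult_assoc a b c)) Rmult_comm Rmult_1_l.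
HB.instance Definition _ := Monoid.isMulLaw.Build R 0 Rmult Rmult_0_l Rmult_0_r.
HB.instance Definition _ := Monoid.isAddLaw.Build R Rmult Rplus Rmult_plus_distr_r Rmult_plus_distr_l.

Lemma sum_le (I : Type) (r : seq I) (P : pred I) (F G : I -> R) :
  (forall i, P i -> F i <= G i) ->
  \big[Rplus/0]_(i <- r | P i) F i <= \big[Rplus/0]_(i <- r | P i) G i.
Proof. move=> H; apply: (big_ind2 (fun a b => a <= b)) => //; [lra| intros; lra]. Qed.

Lemma sum_ge0 (I : Type) (r : seq I) (P : pred I) (F : I -> R) :
  (forall i, P i -> 0 <= F i) -> 0 <= \big[Rplus/0]_(i <- r | P i) F i.
Proof. move=> H; apply: (big_ind (fun a => 0 <= a)) => //; [lra| intros; lra]. Qed.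

Lemma sum_abs (I : Type) (r : seq I) (P : pred I) (F : I -> R) :
  Rabs (\big[Rplus/0]_(i <- r | P i) F i) <= \big[Rplus/0]_(i <- r | P i) Rabs (F i).
Proof.
apply: (big_ind2 (fun a b => Rabs a <= b)) => //.
- rewrite Rabs_R0; lra.
- move=> a b c d H1 H2; have := Rabs_triang a c; lra.
- move=> i _; lra.
Qed.

Lemma sum_mulr (I : Type) (r : seq I) (P : pred I) (F : I -> R) c :
  c * \big[Rplus/0]_(i <- r | P i) F i = \big[Rplus/0]_(i <- r | P i) (c * F i).
Proof. exact: big_distrr. Qed.

Lemma sum_mull (I : Type) (r : seq I) (P : pred I) (F : I -> R) c :
  \big[Rplus/0]_(i <- r | P i) F i * c = \big[Rplus/0]_(i <- r | P i) (F i * c).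
Proof. exact: big_distrl. Qed.

Lemma sum_add (I : Type) (r : seq I) (P : pred I) (F G : I -> R) :
  \big[Rplus/0]_(i <- r | P i) (F i + G i) = \big[Rplus/0]_(i <- r | P i) F i + \big[Rplus/0]_(i <- r | P i) G i.
Proof. exact: big_split. Qed.

Lemma sum_const (I : finType) c :
  \big[Rplus/0]_(i : I) c = INR #|I| * c.
Proof.
rewrite big_const; elim: #|I| => [|m IH] /=; first by lra.
rewrite IH; case: m IH => [|m] _ /=; lra.
Qed.

Section Gen.
Variables (I1 I2 I3 I4 I5 : finType).

Lemma G1 (H : I1 -> I2 -> I3 -> I4 -> I5 -> R) :
  \big[Rplus/0]_x \big[Rplus/0]_y \big[Rplus/0]_a \big[Rplus/0]_b \big[Rplus/0]_s H x y a b s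
  = \big[Rplus/0]_s \big[Rplus/0]_x \big[Rplus/0]_y \big[Rplus/0]_a \big[Rplus/0]_b H x y a b s.
Proof.
under eq_bigr => x _ do under eq_bigr => y _ do under eq_bigr => a _ do rewrite exchange_big.
under eq_bigr => x _ do under eq_bigr => y _ do rewrite exchange_big.
under eq_bigr => x _ do rewrite exchange_big.
by rewrite exchange_big.
Qed.

Lemma G2 (u : I1 -> I3 -> R) (v : I2 -> I4 -> R) :
  (\big[Rplus/0]_x \big[Rplus/0]_a u x a) * (\big[Rplus/0]_y \big[Rplus/0]_b v y b)
  = \big[Rplus/0]_x \big[Rplus/0]_y \big[Rplus/0]_a \big[Rplus/0]_b (u x a * v y b).
Proof.
rewrite big_distrlr.
apply: eq_bigr => x _; apply: eq_bigr => y _.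
by rewrite big_distrlr.
Qed.
End Gen.

Lemma absAMGM (b t : R) : 0 < t -> Rabs b <= t / 2 + b ^ 2 / (2 * t).
Proof.
move=> ht.
have h2 : b ^ 2 = Rabs b ^ 2 by rewrite -Rsqr_pow2 -Rsqr_pow2 Rsqr_abs.
rewrite h2.
have : 0 <= (Rabs b - t) ^ 2 by apply: pow2_ge_0.
move=> h.
have -> : t / 2 + Rabs b ^ 2 / (2 * t) = Rabs b + (Rabs b - t) ^ 2 / (2 * t) by field; lra.
have : 0 <= (Rabs b - t) ^ 2 / (2 * t) by apply: Rle_mult_inv_pos => //; lra.
lra.
Qed.

Lemma AMGM (b t : R) : 0 < t -> b <= t / 2 + b ^ 2 / (2 * t).
Proof. move=> ht; have := absAMGM b ht; have := Rle_abs b; lra. Qed.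

Section Core.
Variables (Om : finType) (n : nat).
Local Notation X := {ffun 'I_n -> Om}.

Definition ind (x : 'I_n) (a : Om) (s : X) : R := if s x == a then 1 else 0.

Lemma marg1E (w : X -> R) x a :
  marg1 w x a = \big[Rplus/0]_s (w s * ind x a s).
Proof.
rewrite /marg1 big_mkcond; apply: eq_bigr => s _; rewrite /ind.
case: (s x == a); lra.
Qed.

Lemma marg2E (w : X -> R) x y a b :
  marg2 w x y a b = \big[Rplus/0]_s (w s * (ind x a s * ind y b s)).
Proof.
rewrite /marg2 big_mkcond; apply: eq_bigr => s _; rewrite /ind.
case: (s x == a); case: (s y == b); simpl; lra.
Qed.

Lemma cov_expand (w f g : X -> R) p q :
  \big[Rplus/0]_s (w s * ((f s - p) * (g s - q))) =
  \big[Rplus/0]_s (w s * (f s * g s)) - q * \big[Rplus/0]_s (w s * f s)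
  - p * \big[Rplus/0]_s (w s * g s) + p * q * \big[Rplus/0]_s w s.
Proof.
rewrite !sum_mulr.
have -> : \big[Rplus/0]_s (w s * ((f s - p) * (g s - q))) =
  \big[Rplus/0]_s (w s * (f s * g s) + ((-1) * (q * (w s * f s)) + ((-1) * (p * (w s * g s)) + p * q * w s))).
  by apply: eq_bigr => s _; ring.
rewrite !sum_add -!sum_mulr; ring.
Qed.

Lemma ind01 x a s : 0 <= ind x a s <= 1.
Proof. rewrite /ind; case: (s x == a); lra. Qed.

Variables (mu F : X -> R) (K : R).
Hypothesis mu_ge0 : forall s, 0 <= mu s.
Hypothesis mu_sum1 : \big[Rplus/0]_s mu s = 1.
Hypothesis F_ge0 : forall s, 0 <= F s.
Hypothesis F_leK : forall s, F s <= K.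
Hypothesis K0 : 0 <= K.
Hypothesis muF_sum1 : \big[Rplus/0]_s (mu s * F s) = 1.

Definition muF s := mu s * F s.
Definition mm x a := marg1 mu x a.
Definition It x a s := ind x a s - mm x a.
Definition Mw (w : X -> R) x a y b := \big[Rplus/0]_s (w s * (It x a s * It y b s)).
Definition dd x a := \big[Rplus/0]_s (muF s * It x a s).

Lemma mm01 x a : 0 <= mm x a <= 1.
Proof.
rewrite /mm marg1E; split.
- apply: sum_ge0 => s _; have := ind01 x a s; have := mu_ge0 s; nra.
- rewrite -mu_sum1; apply: sum_le => s _; have := ind01 x a s; have := mu_ge0 s; nra.
Qed.

Lemma It_bound x a s : Rabs (It x a s) <= 1.
Proof. rewrite /It; have := ind01 x a s; have := mm01 x a; move=> h1 h2; apply: Rabs_le; lra. Qed.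

Lemma L4 x y a b :
  marg2 mu x y a b - marg1 mu x a * marg1 mu y b = Mw mu x a y b.
Proof.
rewrite /Mw /It cov_expand marg2E mu_sum1 /mm -!marg1E; ring.
Qed.

Lemma L5 x a : marg1 muF x a = mm x a + dd x a.
Proof.
rewrite /dd /It.
have -> : \big[Rplus/0]_s (muF s * (ind x a s - mm x a)) =
   \big[Rplus/0]_s (muF s * ind x a s) + (- mm x a) * \big[Rplus/0]_s muF s.
  by rewrite sum_mulr -sum_add; apply: eq_bigr => s _; ring.
rewrite -marg1E /muF muF_sum1; ring.
Qed.

Lemma L6 x y a b :
  marg2 muF x y a b - marg1 muF x a * marg1 muF y b = Mw muF x a y b - dd x a * dd y b.
Proof.
rewrite !L5 /Mw /It cov_expand marg2E.
rewrite -!marg1E !L5 muF_sum1; ring.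
Qed.

Lemma Mw_mu_bound x a y b : Rabs (Mw mu x a y b) <= 1.
Proof.
rewrite /Mw; apply: Rle_trans (sum_abs _ _ _) _.
rewrite -mu_sum1; apply: sum_le => s _.
rewrite Rabs_mult Rabs_mult (Rabs_right (mu s)); last by have := mu_ge0 s; lra.
have := It_bound x a s; have := It_bound y b s; have := mu_ge0 s.
move=> h0 h1 h2.
have h3 : Rabs (It x a s) * Rabs (It y b s) <= 1 * 1 by apply: Rmult_le_compat => //; apply: Rabs_pos.
have := Rmult_le_compat_l _ _ _ h0 h3; lra.
Qed.


Definition eta := \big[Rplus/0]_x \big[Rplus/0]_y \big[Rplus/0]_a \big[Rplus/0]_b Rabs (Mw mu x a y b).

Lemma mul4 (I1 I2 I3 I4 : finType) c (f : I1 -> I2 -> I3 -> I4 -> R) :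
  c * \big[Rplus/0]_x \big[Rplus/0]_y \big[Rplus/0]_a \big[Rplus/0]_b f x y a b =
  \big[Rplus/0]_x \big[Rplus/0]_y \big[Rplus/0]_a \big[Rplus/0]_b (c * f x y a b).
Proof.
rewrite sum_mulr; apply: eq_bigr => x _; rewrite sum_mulr; apply: eq_bigr => y _.
rewrite sum_mulr; apply: eq_bigr => a _; by rewrite sum_mulr.
Qed.

Lemma quadE (w : X -> R) (u : 'I_n -> Om -> X -> R) :
  \big[Rplus/0]_s (w s * (\big[Rplus/0]_x \big[Rplus/0]_a u x a s) ^ 2) =
  \big[Rplus/0]_x \big[Rplus/0]_y \big[Rplus/0]_a \big[Rplus/0]_b
     \big[Rplus/0]_s (w s * (u x a s * u y b s)).
Proof.
rewrite G1; apply: eq_bigr => s _.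
rewrite /= Rmult_1_r G2 mul4 //.
Qed.

Definition sg x a := if Rle_dec 0 (dd x a) then 1 else -1.

Lemma sg_abs x a : Rabs (dd x a) = sg x a * dd x a.
Proof.
rewrite /sg; case: Rle_dec => h /=.
- rewrite Rabs_right; lra.
- rewrite Rabs_left; lra.
Qed.

Lemma Rabs_sg x a : Rabs (sg x a) = 1.
Proof. rewrite /sg; case: Rle_dec => _ /=; rewrite ?Rabs_Ropp Rabs_R1 //. Qed.

Lemma claimA t : 0 < t ->
  \big[Rplus/0]_x \big[Rplus/0]_a Rabs (dd x a) <= K * (t / 2 + eta / (2 * t)).
Proof.
move=> ht.
pose Q s := \big[Rplus/0]_x \big[Rplus/0]_a (sg x a * It x a s).
have e1 : \big[Rplus/0]_x \big[Rplus/0]_a Rabs (dd x a) = \big[Rplus/0]_s (muF s * Q s).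
  under eq_bigr => x _ do under eq_bigr => a _ do rewrite sg_abs /dd sum_mulr.
  under eq_bigr => x _ do rewrite exchange_big.
  rewrite exchange_big; apply: eq_bigr => s _; rewrite /Q sum_mulr.
  apply: eq_bigr => x _; rewrite sum_mulr; apply: eq_bigr => a _; ring.
rewrite e1.
apply: Rle_trans (_ : \big[Rplus/0]_s (K * (mu s * (t / 2 + Q s ^ 2 / (2 * t)))) <= _).
  apply: sum_le => s _; rewrite /muF.
  have h1 := AMGM (Q s) ht.
  have h2 : 0 <= t / 2 + Q s ^ 2 / (2 * t).
    have : 0 <= Q s ^ 2 / (2 * t) by apply: Rle_mult_inv_pos; [apply: pow2_ge_0| lra].
    lra.
  have h3 := mu_ge0 s; have h4 := F_ge0 s; have h5 := F_leK s.
  have h6 : mu s * F s * Q s <= mu s * F s * (t / 2 + Q s ^ 2 / (2 * t)).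
    by apply: Rmult_le_compat_l => //; apply: Rmult_le_pos.
  have h7 : mu s * F s * (t / 2 + Q s ^ 2 / (2 * t)) <= mu s * K * (t / 2 + Q s ^ 2 / (2 * t)).
    apply: Rmult_le_compat_r => //; by apply: Rmult_le_compat_l.
  lra.
rewrite -sum_mulr; apply: Rmult_le_compat_l => //.
have e2 : \big[Rplus/0]_s (mu s * (t / 2 + Q s ^ 2 / (2 * t))) =
   t / 2 * \big[Rplus/0]_s mu s + / (2 * t) * \big[Rplus/0]_s (mu s * Q s ^ 2).
  rewrite !sum_mulr -sum_add; apply: eq_bigr => s _; rewrite /Rdiv; ring.
rewrite e2 mu_sum1.
suff : \big[Rplus/0]_s (mu s * Q s ^ 2) <= eta.
  move=> h; have : / (2 * t) * \big[Rplus/0]_s (mu s * Q s ^ 2) <= / (2 * t) * eta.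
    apply: Rmult_le_compat_l => //; apply: Rlt_le; apply: Rinv_0_lt_compat; lra.
  rewrite /Rdiv; lra.
rewrite /Q quadE /eta.
apply: sum_le => x _; apply: sum_le => y _; apply: sum_le => a _; apply: sum_le => b _.
apply: Rle_trans (Rle_abs _) _.
have -> : \big[Rplus/0]_s (mu s * (sg x a * It x a s * (sg y b * It y b s))) =
   sg x a * sg y b * Mw mu x a y b.
  rewrite /Mw sum_mulr; apply: eq_bigr => s _; ring.
by rewrite !Rabs_mult !Rabs_sg !Rmult_1_l; apply: Rle_refl.
Qed.

Definition Rr s s' := \big[Rplus/0]_x \big[Rplus/0]_a (It x a s * It x a s').

Lemma SB2 (w : X -> R) :
  \big[Rplus/0]_x \big[Rplus/0]_y \big[Rplus/0]_a \big[Rplus/0]_b (Mw w x a y b) ^ 2 =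
  \big[Rplus/0]_s \big[Rplus/0]_s' (w s * w s' * (Rr s s') ^ 2).
Proof.
have -> : \big[Rplus/0]_x \big[Rplus/0]_y \big[Rplus/0]_a \big[Rplus/0]_b (Mw w x a y b) ^ 2 =
  \big[Rplus/0]_x \big[Rplus/0]_y \big[Rplus/0]_a \big[Rplus/0]_b \big[Rplus/0]_s \big[Rplus/0]_s'
     (w s * w s' * ((It x a s * It x a s') * (It y b s * It y b s'))).
  apply: eq_bigr => x _; apply: eq_bigr => y _; apply: eq_bigr => a _; apply: eq_bigr => b _.
  rewrite /= Rmult_1_r /Mw big_distrlr; apply: eq_bigr => s _; apply: eq_bigr => s' _; match goal with |- _ ?u ?v = ?r => change (Rmult u v = r) end; ring.
rewrite G1; apply: eq_bigr => s _.
rewrite G1; apply: eq_bigr => s' _.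
rewrite /Rr /= Rmult_1_r G2 mul4 //.
Qed.

Lemma Mw2_le x a y b : (Mw mu x a y b) ^ 2 <= Rabs (Mw mu x a y b).
Proof.
have h := Mw_mu_bound x a y b; have h0 := Rabs_pos (Mw mu x a y b).
rewrite -Rsqr_pow2 Rsqr_abs /Rsqr.
have := Rmult_le_compat_l _ _ _ h0 h; lra.
Qed.

Lemma claimB_sq :
  \big[Rplus/0]_x \big[Rplus/0]_y \big[Rplus/0]_a \big[Rplus/0]_b (Mw muF x a y b) ^ 2 <= K ^ 2 * eta.
Proof.
rewrite SB2.
apply: Rle_trans (_ : _ <= K ^ 2 * \big[Rplus/0]_s \big[Rplus/0]_s' (mu s * mu s' * (Rr s s') ^ 2)) _.
  rewrite sum_mulr; apply: sum_le => s _; rewrite sum_mulr; apply: sum_le => s' _.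
  rewrite /muF.
  have h1 := mu_ge0 s; have h2 := mu_ge0 s'; have h3 := F_ge0 s; have h4 := F_ge0 s'.
  have h5 := F_leK s; have h6 := F_leK s'.
  have h7 : 0 <= (Rr s s') ^ 2 by apply: pow2_ge_0.
  have h8 : mu s * F s <= mu s * K by apply: Rmult_le_compat_l.
  have h9 : mu s' * F s' <= mu s' * K by apply: Rmult_le_compat_l.
  have h10 : mu s * F s * (mu s' * F s') <= mu s * K * (mu s' * K).
    apply: Rmult_le_compat => //; apply: Rmult_le_pos => //.
  have := Rmult_le_compat_r _ _ _ h7 h10.
  move=> h11; apply: Rle_trans h11 _; right; ring.
apply: Rmult_le_compat_l; first by apply: pow2_ge_0.
rewrite -SB2 /eta.
apply: sum_le => x _; apply: sum_le => y _; apply: sum_le => a _; apply: sum_le => b _.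
exact: Mw2_le.
Qed.

Lemma count4 c :
  \big[Rplus/0]_(x : 'I_n) \big[Rplus/0]_(y : 'I_n) \big[Rplus/0]_(a : Om) \big[Rplus/0]_(b : Om) c
  = INR n * INR n * INR #|Om| * INR #|Om| * c.
Proof.
have e1 : forall (x y : 'I_n) (a : Om), \big[Rplus/0]_(b : Om) c = INR #|Om| * c by move=> *; apply: sum_const.
have e2 : forall (x y : 'I_n), \big[Rplus/0]_(a : Om) \big[Rplus/0]_(b : Om) c = INR #|Om| * (INR #|Om| * c).
  by move=> x y; rewrite (eq_bigr (fun _ => INR #|Om| * c)) ?sum_const // => a _; apply: e1.
have e3 : forall (x : 'I_n), \big[Rplus/0]_(y : 'I_n) \big[Rplus/0]_(a : Om) \big[Rplus/0]_(b : Om) c = INR n * (INR #|Om| * (INR #|Om| * c)).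
  by move=> x; rewrite (@eq_bigr _ _ _ 'I_n _ _ _ (fun _ => INR #|Om| * (INR #|Om| * c))) ?sum_const ?card_ord // => y _; apply: e2.
rewrite (@eq_bigr _ _ _ 'I_n _ _ _ (fun _ => INR n * (INR #|Om| * (INR #|Om| * c)))) ?sum_const ?card_ord; [ring | by []].
Qed.

Lemma claimB t : 0 < t ->
  \big[Rplus/0]_x \big[Rplus/0]_y \big[Rplus/0]_a \big[Rplus/0]_b Rabs (Mw muF x a y b)
  <= INR n * INR n * INR #|Om| * INR #|Om| * (t / 2) + K ^ 2 * eta / (2 * t).
Proof.
move=> ht.
apply: Rle_trans (_ : _ <= \big[Rplus/0]_x \big[Rplus/0]_y \big[Rplus/0]_a \big[Rplus/0]_b
    (t / 2 + / (2 * t) * (Mw muF x a y b) ^ 2)) _.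
  apply: sum_le => x _; apply: sum_le => y _; apply: sum_le => a _; apply: sum_le => b _.
  have := absAMGM (Mw muF x a y b) ht; rewrite /Rdiv; lra.
have -> : forall (f g : 'I_n -> 'I_n -> Om -> Om -> R),
  \big[Rplus/0]_x \big[Rplus/0]_y \big[Rplus/0]_a \big[Rplus/0]_b (f x y a b + g x y a b) =
  \big[Rplus/0]_x \big[Rplus/0]_y \big[Rplus/0]_a \big[Rplus/0]_b f x y a b +
  \big[Rplus/0]_x \big[Rplus/0]_y \big[Rplus/0]_a \big[Rplus/0]_b g x y a b.
  move=> f g; rewrite -sum_add; apply: eq_bigr => x _; rewrite -sum_add; apply: eq_bigr => y _.
  rewrite -sum_add; apply: eq_bigr => a _; by rewrite -sum_add.
rewrite count4 -mul4.
have := claimB_sq.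
have : 0 < / (2 * t) by apply: Rinv_0_lt_compat; lra.
move=> hi hq.
have := Rmult_le_compat_l _ _ _ (Rlt_le _ _ hi) hq.
rewrite /Rdiv; lra.
Qed.

Lemma split4 (f g : 'I_n -> 'I_n -> Om -> Om -> R) :
  \big[Rplus/0]_x \big[Rplus/0]_y \big[Rplus/0]_a \big[Rplus/0]_b (f x y a b + g x y a b) =
  \big[Rplus/0]_x \big[Rplus/0]_y \big[Rplus/0]_a \big[Rplus/0]_b f x y a b +
  \big[Rplus/0]_x \big[Rplus/0]_y \big[Rplus/0]_a \big[Rplus/0]_b g x y a b.
Proof.
rewrite -sum_add; apply: eq_bigr => x _; rewrite -sum_add; apply: eq_bigr => y _.
rewrite -sum_add; apply: eq_bigr => a _; by rewrite -sum_add.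
Qed.

Lemma le4 (f g : 'I_n -> 'I_n -> Om -> Om -> R) :
  (forall x y a b, f x y a b <= g x y a b) ->
  \big[Rplus/0]_x \big[Rplus/0]_y \big[Rplus/0]_a \big[Rplus/0]_b f x y a b <=
  \big[Rplus/0]_x \big[Rplus/0]_y \big[Rplus/0]_a \big[Rplus/0]_b g x y a b.
Proof.
move=> H; apply: sum_le => x _; apply: sum_le => y _; apply: sum_le => a _; apply: sum_le => b _.
exact: H.
Qed.

Lemma final (eps alpha gam : R) :
  0 < alpha -> (0 < n)%N -> 0 < K -> 0 < eps ->
  gam = Rmin alpha (1 / 2) ->
  eps <= gam ^ 2 / (2 * K ^ 2) ->
  eps <= alpha ^ 2 / (2 * K ^ 2 * (INR #|Om| + 1) ^ 2) ->
  symmetric2 eps mu ->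
  symmetric2 alpha muF /\
  \big[Rplus/0]_(x : 'I_n) tv1 (marg1 mu x) (marg1 muF x) < alpha * INR n.
Proof.
move=> ha hn hK he hgam he1 he2 Hsym.
have n1 : 1 <= INR n by apply: (le_INR 1); apply/leP.
set nn := INR n in n1 *.
have g0 : 0 < gam by rewrite hgam; apply: Rmin_pos; lra.
have g1 : gam <= alpha by rewrite hgam; apply: Rmin_l.
have g2 : gam <= 1/2 by rewrite hgam; apply: Rmin_r.
have eta0 : 0 <= eta.
  by rewrite /eta; apply: sum_ge0 => x _; apply: sum_ge0 => y _; apply: sum_ge0 => a _;
     apply: sum_ge0 => b _; apply: Rabs_pos.
have Heta : eta < 2 * eps * nn ^ 2.
  move: Hsym; rewrite /symmetric2 /tv2 /=.
  have -> : \big[Rplus/0]_(x : 'I_n) \big[Rplus/0]_(y : 'I_n) (/ 2 * \big[Rplus/0]_(w : Om) \big[Rplus/0]_(w' : Om)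
     Rabs (marg2 mu x y w w' - marg1 mu x w * marg1 mu y w')) = / 2 * eta.
    rewrite /eta sum_mulr; apply: eq_bigr => x _; rewrite sum_mulr; apply: eq_bigr => y _.
    congr (_ * _); apply: eq_bigr => a _; apply: eq_bigr => b _; by rewrite L4.
  rewrite /nn; lra.
set D := \big[Rplus/0]_x \big[Rplus/0]_a Rabs (dd x a).
have D0 : 0 <= D by apply: sum_ge0 => x _; apply: sum_ge0 => a _; apply: Rabs_pos.
have HD : D <= gam * nn.
  have t0 : 0 < gam * nn / K by apply: Rmult_lt_0_compat; [nra| apply: Rinv_0_lt_compat].
  apply: Rle_trans (claimA t0) _.
  have -> : K * (gam * nn / K / 2 + eta / (2 * (gam * nn / K))) =
            gam * nn / 2 + K ^ 2 * eta / (2 * gam * nn) by field; lra.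
  have h1 : K ^ 2 * eta <= gam ^ 2 * nn ^ 2.
    have hK2 : 0 < K ^ 2 by apply: pow_lt.
    have : K ^ 2 * eps <= gam ^ 2 / 2.
      have := Rmult_le_compat_l _ _ _ (Rlt_le _ _ hK2) he1.
      have -> : K ^ 2 * (gam ^ 2 / (2 * K ^ 2)) = gam ^ 2 / 2 by field; lra.
      done.
    have := Rmult_le_compat_l _ _ _ (Rlt_le _ _ hK2) (Rlt_le _ _ Heta).
    have : 0 <= nn ^ 2 by apply: pow2_ge_0.
    nra.
  have h2 : K ^ 2 * eta / (2 * gam * nn) <= gam ^ 2 * nn ^ 2 / (2 * gam * nn).
    apply: Rmult_le_compat_r => //; left; apply: Rinv_0_lt_compat; nra.
  have e3 : gam ^ 2 * nn ^ 2 / (2 * gam * nn) = gam * nn / 2 by field; lra.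
  lra.
have HB : \big[Rplus/0]_x \big[Rplus/0]_y \big[Rplus/0]_a \big[Rplus/0]_b Rabs (Mw muF x a y b)
          <= alpha * nn ^ 2.
  set Q0 := INR #|Om| in he2 *.
  have Q00 : 0 <= Q0 by apply: pos_INR.
  have Q1 : 0 < (Q0 + 1) ^ 2 by apply: pow_lt; lra.
  have t0 : 0 < alpha / (Q0 + 1) ^ 2 by apply: Rmult_lt_0_compat => //; apply: Rinv_0_lt_compat.
  apply: Rle_trans (claimB t0) _.
  have a1 : nn * nn * Q0 * Q0 * (alpha / (Q0 + 1) ^ 2 / 2) <= alpha * nn ^ 2 / 2.
    have : Q0 * Q0 <= (Q0 + 1) ^ 2 by nra.
    move=> hq.
    have -> : nn * nn * Q0 * Q0 * (alpha / (Q0 + 1) ^ 2 / 2) =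
              (alpha * nn ^ 2 / 2) * (Q0 * Q0 / (Q0 + 1) ^ 2) by field; lra.
    have : Q0 * Q0 / (Q0 + 1) ^ 2 <= 1.
      apply: (Rmult_le_reg_r ((Q0 + 1) ^ 2)) => //.
      rewrite /Rdiv Rmult_assoc Rinv_l; lra.
    have : 0 <= Q0 * Q0 / (Q0 + 1) ^ 2 by apply: Rle_mult_inv_pos => //; nra.
    have : 0 <= alpha * nn ^ 2 / 2 by have := pow2_ge_0 nn; move=> *; apply: Rle_mult_inv_pos; nra.
    nra.
  have a2 : K ^ 2 * eta / (2 * (alpha / (Q0 + 1) ^ 2)) <= alpha * nn ^ 2 / 2.
    have -> : K ^ 2 * eta / (2 * (alpha / (Q0 + 1) ^ 2)) = K ^ 2 * (Q0 + 1) ^ 2 * eta / (2 * alpha)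
      by field; lra.
    have hK2 : 0 < K ^ 2 * (Q0 + 1) ^ 2 by apply: Rmult_lt_0_compat => //; apply: pow_lt.
    have : K ^ 2 * (Q0 + 1) ^ 2 * eps <= alpha ^ 2 / 2.
      have := Rmult_le_compat_l _ _ _ (Rlt_le _ _ hK2) he2.
      have -> : K ^ 2 * (Q0 + 1) ^ 2 * (alpha ^ 2 / (2 * K ^ 2 * (Q0 + 1) ^ 2)) = alpha ^ 2 / 2
        by field; split; lra.
      done.
    move=> hh.
    have h3 : K ^ 2 * (Q0 + 1) ^ 2 * eta <= alpha ^ 2 * nn ^ 2.
      have := Rmult_le_compat_l _ _ _ (Rlt_le _ _ hK2) (Rlt_le _ _ Heta).
      have : 0 <= nn ^ 2 by apply: pow2_ge_0.
      nra.
    have : K ^ 2 * (Q0 + 1) ^ 2 * eta / (2 * alpha) <= alpha ^ 2 * nn ^ 2 / (2 * alpha).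
      apply: Rmult_le_compat_r => //; left; apply: Rinv_0_lt_compat; lra.
    have -> : alpha ^ 2 * nn ^ 2 / (2 * alpha) = alpha * nn ^ 2 / 2 by field; lra.
    done.
  rewrite -/nn -/Q0; lra.
split.
- rewrite /symmetric2 /tv2 /=.
  have -> : \big[Rplus/0]_(x : 'I_n) \big[Rplus/0]_(y : 'I_n) (/ 2 * \big[Rplus/0]_(w : Om) \big[Rplus/0]_(w' : Om)
     Rabs (marg2 muF x y w w' - marg1 muF x w * marg1 muF y w')) =
     / 2 * \big[Rplus/0]_x \big[Rplus/0]_y \big[Rplus/0]_a \big[Rplus/0]_b
        Rabs (Mw muF x a y b - dd x a * dd y b).
    rewrite sum_mulr; apply: eq_bigr => x _; rewrite sum_mulr; apply: eq_bigr => y _.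
    congr (_ * _); apply: eq_bigr => a _; apply: eq_bigr => b _; by rewrite L6.
  have h1 : \big[Rplus/0]_x \big[Rplus/0]_y \big[Rplus/0]_a \big[Rplus/0]_b
        Rabs (Mw muF x a y b - dd x a * dd y b) <=
        \big[Rplus/0]_x \big[Rplus/0]_y \big[Rplus/0]_a \big[Rplus/0]_b
        (Rabs (Mw muF x a y b) + Rabs (dd x a) * Rabs (dd y b)).
    apply: le4 => x y a b; have := Rabs_triang (Mw muF x a y b) (- (dd x a * dd y b)).
    by rewrite Rabs_Ropp Rabs_mult.
  rewrite split4 -G2 -/D in h1.
  have h2 : D * D <= gam * nn * (gam * nn) by apply: Rmult_le_compat.
  have h3 : gam * gam <= alpha / 2 by nra.
  have h0 : 0 < nn ^ 2 by apply: pow_lt; lra.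
  have h4 : gam * nn * (gam * nn) <= alpha / 2 * nn ^ 2.
    have -> : gam * nn * (gam * nn) = gam * gam * nn ^ 2 by ring.
    by apply: Rmult_le_compat_r; [apply: pow2_ge_0 | lra].
  rewrite -/nn (_ : nn * (nn * 1) = nn ^ 2); [nra | ring].
- have -> : \big[Rplus/0]_(x : 'I_n) tv1 (marg1 mu x) (marg1 muF x) = / 2 * D.
    rewrite /D sum_mulr; apply: eq_bigr => x _; rewrite /tv1; congr (_ * _).
    apply: eq_bigr => a _; rewrite L5 /mm.
    have -> : marg1 mu x a - (marg1 mu x a + dd x a) = - dd x a by ring.
    by rewrite Rabs_Ropp.
  nra.
Qed.

End Core.

Lemma list_lb (T : Type) (r : list T) (f : T -> R) :
  (forall i, List.In i r -> 0 < f i) -> exists l, 0 < l /\ forall i, List.In i r -> l <= f i.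
Proof.
elim: r => [|x r IH] H.
- exists 1; split; [lra| by []].
- have [l [l0 Hl]] : exists l, 0 < l /\ forall i, List.In i r -> l <= f i.
    by apply: IH => i hi; apply: H; right.
  have fx := H x (or_introl erefl).
  exists (Rmin l (f x)); split; first by apply: Rmin_pos.
  move=> i [<-|hi]; first by apply: Rmin_r.
  apply: Rle_trans (Rmin_l _ _) _; exact: Hl.
Qed.

Lemma list_ub (T : Type) (r : list T) (f : T -> R) :
  exists u, forall i, List.In i r -> f i <= u.
Proof.
elim: r => [|x r [u Hu]]; first by exists 0.
exists (Rmax u (f x)) => i [<-|hi]; first by apply: Rmax_r.
apply: Rle_trans (Rmax_l u _); exact: Hu.
Qed.

Lemma seq_min (T : eqType) (r : seq T) (F : T -> R) j : j \in r ->
  \big[Rmin/1]_(i <- r) F i <= F j.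
Proof.
elim: r => [|x r IH] //; rewrite inE big_cons => /orP [/eqP ->|h].
- exact: Rmin_l.
- apply: Rle_trans (Rmin_r _ _) _; exact: IH.
Qed.

Lemma seq_max (T : eqType) (r : seq T) (F : T -> R) j : j \in r ->
  F j <= \big[Rmax/0]_(i <- r) F i.
Proof.
elim: r => [|x r IH] //; rewrite inE big_cons => /orP [/eqP ->|h].
- exact: Rmax_l.
- apply: Rle_trans (Rmax_r _ _); exact: IH.
Qed.

Lemma fin_lb (T : finType) (F : T -> R) : (forall i, 0 < F i) ->
  exists l, 0 < l /\ forall i, l <= F i.
Proof.
move=> H; exists (\big[Rmin/1]_(i : T) F i); split.
- apply: (big_ind (fun x => 0 < x)) => //; first lra.
  by move=> *; apply: Rmin_pos.
- move=> i; apply: seq_min; exact: mem_index_enum.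
Qed.

Lemma fin_ub (T : finType) (F : T -> R) : exists u, forall i, F i <= u.
Proof. exists (\big[Rmax/0]_(i : T) F i) => i; apply: seq_max; exact: mem_index_enum. Qed.

Lemma prod_bounds (T : Type) (r : list T) (f : T -> R) lo hi :
  0 <= lo -> (forall i, List.In i r -> lo <= f i <= hi) ->
  lo ^ (size r) <= \big[Rmult/1]_(i <- r) f i <= hi ^ (size r).
Proof.
move=> l0; elim: r => [|x r IH] H; first by rewrite big_nil /=; lra.
rewrite big_cons /=.
have [h1 h2] := H x (or_introl erefl).
have [h3 h4] : lo ^ size r <= \big[Rmult/1]_(i <- r) f i <= hi ^ size r.
  by apply: IH => i hi'; apply: H; right.
have p0 : 0 <= lo ^ size r by apply: pow_le.
split.
- apply: Rmult_le_compat => //.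
- apply: Rmult_le_compat => //; lra.
Qed.

Lemma sum_ge_term (T : finType) (P : pred T) (F : T -> R) j :
  P j -> (forall i, P i -> 0 <= F i) -> F j <= \big[Rplus/0]_(i | P i) F i.
Proof.
move=> hj H; rewrite (bigD1 j) //=.
have : 0 <= \big[Rplus/0]_(i | P i && (i != j)) F i.
  by apply: sum_ge0 => i /andP [hi _]; apply: H.
lra.
Qed.

Lemma psiJ_bounds (Om : finType) (k : nat) (psi : {ffun 'I_k -> Om} -> R) J tau l u :
  (0 < #|Om|)%N -> 0 < l -> (forall rho, l <= psi rho <= u) ->
  l / INR #|Om| ^ k <= psiJ psi J tau <= INR #|{ffun 'I_k -> Om}| * u.
Proof.
move=> hO l0 H.
have O1 : 1 <= INR #|Om| by apply: (le_INR 1); apply/leP.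
have P1 : 1 <= INR #|Om| ^ (k - #|J|) by apply: pow_R1_Rle.
have P2 : INR #|Om| ^ (k - #|J|) <= INR #|Om| ^ k.
  by apply: Rle_pow => //; apply/leP; apply: leq_subr.
rewrite /psiJ; set S := \big[Rplus/0]_(rho | _) psi rho.
have S1 : l <= S.
  pose rho0 : {ffun 'I_k -> Om} := [ffun j => tau j].
  apply: Rle_trans (proj1 (H rho0)) _.
  apply: sum_ge_term.
  - by apply/forall_inP => j _; rewrite ffunE.
  - move=> i _; have := H i; lra.
have S2 : S <= INR #|{ffun 'I_k -> Om}| * u.
  rewrite -sum_const /S big_mkcond; apply: sum_le => i _.
  case: ifP => _; have := H i; lra.
split.
- apply: Rle_trans (_ : l / INR #|Om| ^ (k - #|J|) <= _).
  + apply: Rmult_le_compat_l; first lra.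
    apply: Rinv_le_contravar => //; lra.
  + apply: Rmult_le_compat_r => //; left; apply: Rinv_0_lt_compat; lra.
- apply: Rle_trans S2.
  have h : / INR #|Om| ^ (k - #|J|) <= 1.
    rewrite -Rinv_1; apply: Rinv_le_contravar => //; lra.
  have : 0 < / INR #|Om| ^ (k - #|J|) by apply: Rinv_0_lt_compat; lra.
  rewrite /Rdiv; move=> h'; nra.
Qed.
Unset Implicit Arguments.

Theorem lemma7 (Om : finType) (k : nat) (Psi : list ({ffun 'I_k -> Om} -> R)) :
  (3 <= k)%N ->
  Psi <> nil ->
  (forall psi, List.In psi Psi -> forall s, 0 < psi s) ->
  forall L : nat, (0 < L)%N ->
  forall alpha : R, 0 < alpha ->
  exists eps : R, 0 < eps /\
  exists n0 : nat,
  forall (n : nat), (n0 < n)%N ->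
  forall G : factor_graph Om k n,
    (forall a, List.In a G -> in_Psi_star Psi a) ->
    symmetric2 eps (gibbs G) ->
  forall bs : factor_graph Om k n,
    size bs = L ->
    (forall b, List.In b bs -> in_Psi_star Psi b) ->
    symmetric2 alpha (gibbs (G ++ bs)) /\
    \big[Rplus/0]_(x : 'I_n) tv1 (marg1 (gibbs G) x) (marg1 (gibbs (G ++ bs)) x)
      < alpha * INR n.
Proof.
move=> hk _ hpos L hL alpha ha.
case: (posnP #|Om|) => [O0 | Opos].
  have Z0 : forall f : Om -> R, \big[Rplus/0]_(w : Om) f w = 0.
    move=> f; apply: big1 => w _; exfalso; move: (card0_eq O0 w); by rewrite !inE.
  exists 1; split; first lra.
  exists 0%N => n hn G _ _ bs _ _.
  have n1 : 1 <= INR n by apply: (le_INR 1); apply/leP.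
  split.
  - rewrite /symmetric2 /tv2.
    rewrite (eq_bigr (fun _ => 0)); last first.
      move=> x _; apply: big1 => y _; rewrite Z0; ring.
    rewrite big1 //; apply: Rmult_lt_0_compat => //; apply: pow_lt; lra.
  - rewrite /tv1 (eq_bigr (fun _ => 0)); last by move=> x _; rewrite Z0; ring.
    rewrite big1 //; apply: Rmult_lt_0_compat => //; lra.
have [o _] : exists o : Om, true by case/card_gt0P: Opos => o _; exists o.
have [l [l0 Hl]] : exists l, 0 < l /\ forall psi, List.In psi Psi -> forall rho, l <= psi rho.
  have [l [l0 Hl]] := @list_lb _ Psi (fun psi => \big[Rmin/1]_(rho : {ffun 'I_k -> Om}) psi rho)
     (fun psi hp => big_ind (fun x => 0 < x) Rlt_0_1 (fun a b => @Rmin_pos a b) (fun rho _ => hpos psi hp rho)).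
  exists l; split => // psi hp rho; apply: Rle_trans (Hl psi hp) _.
  apply: seq_min; exact: mem_index_enum.
have [u Hu] : exists u, forall psi, List.In psi Psi -> forall rho, psi rho <= u.
  have [u Hu] := @list_ub _ Psi (fun psi => \big[Rmax/0]_(rho : {ffun 'I_k -> Om}) psi rho).
  exists u => psi hp rho; apply: Rle_trans (Hu psi hp).
  apply: seq_max; exact: mem_index_enum.
pose lo := l / INR #|Om| ^ k.
pose U := INR #|{ffun 'I_k -> Om}| * u.
have O1 : 1 <= INR #|Om| by apply: (le_INR 1); apply/leP.
have lo0 : 0 < lo by apply: Rmult_lt_0_compat => //; apply: Rinv_0_lt_compat; apply: pow_lt; lra.
have Hab : forall n (a : constraint Om k n), in_Psi_star Psi a -> forall tau,
    lo <= psiJ (c_psi a) (c_J a) tau <= U.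
  move=> n a hA tau; apply: psiJ_bounds => // rho; split; [exact: Hl | exact: Hu].
pose K := Rabs (U ^ L / lo ^ L) + 1.
have K1 : 1 <= K by have := Rabs_pos (U ^ L / lo ^ L); rewrite /K; lra.
pose gam := Rmin alpha (1 / 2).
pose Q1 := INR #|Om| + 1.
have g0 : 0 < gam by apply: Rmin_pos; lra.
have Q10 : 0 < Q1 by rewrite /Q1; lra.
exists (Rmin (gam ^ 2 / (2 * K ^ 2)) (alpha ^ 2 / (2 * K ^ 2 * Q1 ^ 2))); split.
  apply: Rmin_pos; apply: Rmult_lt_0_compat; try apply: pow_lt => //; try apply: Rinv_0_lt_compat.
  - apply: Rmult_lt_0_compat; [lra | apply: pow_lt; lra].
  - apply: Rmult_lt_0_compat; [apply: Rmult_lt_0_compat; [lra | apply: pow_lt; lra] | apply: pow_lt; lra].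
exists 0%N => n hn G HG Hsym bs Hsize Hbs.
pose s0 : {ffun 'I_n -> Om} := [ffun _ => o].
have HgG : forall s, lo ^ size G <= gweight G s.
  move=> s; have [h _] := @prod_bounds _ G (fun a => psiJ (c_psi a) (c_J a) (fun j => s (c_nb a j))) lo U
    (Rlt_le _ _ lo0) (fun a hA => Hab _ a (HG a hA) _); exact: h.
have Hgb : forall s, lo ^ L <= gweight bs s <= U ^ L.
  move=> s; rewrite -Hsize; exact: (@prod_bounds _ bs (fun a => psiJ (c_psi a) (c_J a) (fun j => s (c_nb a j))) lo U
    (Rlt_le _ _ lo0) (fun a hA => Hab _ a (Hbs a hA) _)).
have loG : 0 < lo ^ size G by apply: pow_lt.
have loL : 0 < lo ^ L by apply: pow_lt.
have Z0 : 0 < partition_fn G.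
  apply: Rlt_le_trans loG _; apply: Rle_trans (HgG s0) _; rewrite /partition_fn.
  apply: (sum_ge_term (P := xpredT)) => // i _.
  have := HgG i; have : 0 < lo ^ size G by apply: pow_lt.
  lra.
pose mu := gibbs G.
have mu_ge0 : forall s, 0 <= mu s.
  move=> s; apply: Rle_mult_inv_pos => //; have := HgG s; lra.
have mu_sum1 : \big[Rplus/0]_s mu s = 1.
  rewrite /mu /gibbs /Rdiv -sum_mull -/(partition_fn G); field; lra.
pose E := \big[Rplus/0]_s (mu s * gweight bs s).
have E0 : lo ^ L <= E.
  rewrite -[lo ^ L]Rmult_1_l -mu_sum1 sum_mull; apply: sum_le => s _.
  apply: Rmult_le_compat_l => //; exact: proj1 (Hgb s).
pose F s := gweight bs s / E.
have F_ge0 : forall s, 0 <= F s.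
  move=> s; apply: Rle_mult_inv_pos; [have := Hgb s; lra | lra].
have F_leK : forall s, F s <= K.
  move=> s; rewrite /F /K.
  have h1 : gweight bs s / E <= U ^ L / lo ^ L.
    have [h2 h3] := Hgb s.
    apply: Rle_trans (_ : gweight bs s / E <= U ^ L / E) _.
      apply: Rmult_le_compat_r => //; left; apply: Rinv_0_lt_compat; lra.
    apply: Rmult_le_compat_l; first lra.
    apply: Rinv_le_contravar => //.
  have := Rle_abs (U ^ L / lo ^ L); lra.
have muF_sum1 : \big[Rplus/0]_s (mu s * F s) = 1.
  rewrite /F.
  have -> : \big[Rplus/0]_s (mu s * (gweight bs s / E)) = E / E.
    rewrite /E /Rdiv sum_mull; apply: eq_bigr => s _; ring.
  field; lra.
have Hgibbs : gibbs (G ++ bs) = muF mu F.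
  apply: functional_extensionality => s.
  have gcat : forall s, gweight (G ++ bs) s = gweight G s * gweight bs s.
    by move=> s'; rewrite /gweight big_cat.
  have pcat : partition_fn (G ++ bs) = partition_fn G * E.
    rewrite {1}/partition_fn /E sum_mulr; apply: eq_bigr => s' _.
    rewrite gcat /mu /gibbs; field; lra.
  rewrite /gibbs gcat pcat /muF /F /mu /gibbs; field; split; lra.
rewrite Hgibbs.
have K0 : 0 <= K by lra.
have := final mu_ge0 mu_sum1 F_ge0 F_leK K0 muF_sum1 ha hn (Rlt_le_trans _ _ _ Rlt_0_1 K1) _ (erefl gam) (Rmin_l _ _) (Rmin_r _ _) Hsym.
apply.
apply: Rmin_pos; apply: Rmult_lt_0_compat; try apply: pow_lt => //; try apply: Rinv_0_lt_compat.
  + apply: Rmult_lt_0_compat; [lra | apply: pow_lt; lra].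
  + apply: Rmult_lt_0_compat; [apply: Rmult_lt_0_compat; [lra | apply: pow_lt; lra] | apply: pow_lt; lra].
Qed.
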